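(* Let $b,c$ be rational numbers with $0<b\le b_\sigma$. For each $u\in\mathbf{Z}^n_{\ge0}$ with $0\le u_i<q$ for all $i$, the basic Dwork operator $\Theta_u$ satisfies $\Theta_u(L(b,c))\subseteq L(qb,c)$. In particular, each $\Theta_u$ maps $A$ into $A$.
   Context: $R$ is a complete discrete valuation ring of characteristic $0$ with uniformizer $\pi$, residue field $\mathbf{F}_q$ ($q$ a power of $p$), valuation $\mathrm{ord}_\pi$. Fix $n\ge1$; for $u\in\mathbf{Z}^n_{\ge0}$, $X^u=\prod X_i^{u_i}$, $|u|=\sum u_i$. $A_0=\{\sum a_uX^u:a_u\in R,\ \mathrm{ord}_\pi a_u\to\infty\}$, $A=\{\sum a_uX^u\in A_0:\liminf_{|u|\to\infty}\mathrm{ord}_\pi a_u/|u|>0\}$. $\sigma$ is an $R$-algebra endomorphism of $A_0$ with $\sigma(X_i)=X_i^q+\pi f_i$, $f_i\in A$. For rational $b>0$ and $c$, $L(b,c)=\{\sum_va_vX^v:a_v\in R,\ \mathrm{ord}_\pi a_v\ge b|v|+c\}$. $b_\sigma>0$ is a fixed rational number with $\pi f_i\in L(b_\sigma,0)$ for $1\le i\le n$. The ring $A_0$ is a free $\sigma(A_0)$-module with basis $\{X^u:0\le u_i<q\}$, so every $f\in A_0$ is uniquely $f=\sum_{0\le u_i<q}\sigma(\Theta_u(f))X^u$ with $\Theta_u(f)\in A_0$; these maps $\Theta_u$ are the basic Dwork operators. *)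

(* Defs.v *)
From mathcomp Require Import all_boot all_order all_algebra.
Set Implicit Arguments. Unset Strict Implicit. Unset Printing Implicit Defensive.
Import Order.TTheory GRing.Theory Num.Theory.
Local Open Scope ring_scope.

Definition rdvd (R : comNzRingType) (y x : R) : Prop := exists r : R, x = y * r.

(* v is the normalized pi-adic valuation on nonzero elements:
   every nonzero a is pi^(v a) times a unit; pi is a nonzero non-unit. *)
Definition is_cdvr (R : idomainType) (v : R -> nat) (pi : R) (q : nat) : Prop :=
  [/\ pi != 0 /\ ~~ (pi \is a GRing.unit),
      (forall a : R, a != 0 -> exists w : R, w \is a GRing.unit /\ a = pi ^+ v a * w),
      [pchar R] =i pred0,
      (* pi-adic completeness *)
      (forall s : nat -> R, (forall k, rdvd (pi ^+ k) (s k.+1 - s k)) ->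
          exists l : R, forall k, rdvd (pi ^+ k) (l - s k))
    & (* residue field R / pi R has exactly q elements *)
      exists s : seq R, [/\ size s = q,
         (forall i j, (i < q)%N -> (j < q)%N -> rdvd pi (s`_i - s`_j) -> i = j)
       & forall a : R, exists2 i, (i < q)%N & rdvd pi (a - s`_i)] ].

(* ord_pi a >= x  (with ord_pi 0 = +oo), for rational x *)
Definition ordge (R : idomainType) (v : R -> nat) (a : R) (x : rat) : Prop :=
  a = 0 \/ x <= (v a)%:R.

Definition mon (n : nat) := {ffun 'I_n -> nat}.
Definition deg (n : nat) (u : mon n) : nat := (\sum_(i < n) u i)%N.
Definition series (R : Type) (n : nat) := mon n -> R.

Definition sadd (R : idomainType) n (f g : series R n) : series R n := fun u => f u + g u.
Definition sscale (R : idomainType) n (a : R) (f : series R n) : series R n := fun u => a * f u.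
Definition sX (R : idomainType) n (u : mon n) : series R n := fun w => (w == u)%:R.
(* Cauchy product: (fg)_w = sum_{u <= w} f_u g_{w-u} *)
Definition smul (R : idomainType) n (f g : series R n) : series R n := fun w =>
  \sum_(t : {ffun 'I_n -> 'I_(deg w).+1} | [forall i, (t i <= w i)%N])
     f [ffun i => nat_of_ord (t i)] * g [ffun i => (w i - t i)%N].

Definition emon n (i : 'I_n) (k : nat) : mon n := [ffun j => if j == i then k else 0%N].

Definition inA0 (R : idomainType) (v : R -> nat) n (f : series R n) : Prop :=
  forall N : nat, exists M : nat, forall u : mon n, (M <= deg u)%N -> ordge v (f u) N%:R.

(* A : A_0 and liminf_{|u|->oo} ord a_u / |u| > 0 *)
Definition inA (R : idomainType) (v : R -> nat) n (f : series R n) : Prop :=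
  inA0 v f /\
  exists2 eps : rat, 0 < eps & exists M : nat, forall u : mon n,
    (M <= deg u)%N -> ordge v (f u) (eps * (deg u)%:R).

Definition inL (R : idomainType) (v : R -> nat) n (b c : rat) (f : series R n) : Prop :=
  forall u : mon n, ordge v (f u) (b * (deg u)%:R + c).

Definition mon0 n : mon n := [ffun _ => 0%N].

Definition is_frob (R : idomainType) (v : R -> nat) (pi : R) (q n : nat)
    (sigma : series R n -> series R n) (fs : 'I_n -> series R n) : Prop :=
  [/\ (forall f, inA0 v f -> inA0 v (sigma f)) /\
      (forall f g, inA0 v f -> inA0 v g -> sigma (sadd f g) =1 sadd (sigma f) (sigma g)),
      (forall (a : R) f, inA0 v f -> sigma (sscale a f) =1 sscale a (sigma f)),
      (forall f g, inA0 v f -> inA0 v g -> sigma (smul f g) =1 smul (sigma f) (sigma g)),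
      sigma (sX R (mon0 n)) =1 sX R (mon0 n) /\ (forall i, inA v (fs i))
    & forall i, sigma (sX R (emon i 1)) =1 sadd (sX R (emon i q)) (sscale pi (fs i))].

Definition boxmon n q (d : {ffun 'I_n -> 'I_q}) : mon n := [ffun i => nat_of_ord (d i)].

Definition dwork_sum (R : idomainType) n q (sigma : series R n -> series R n)
    (g : {ffun 'I_n -> 'I_q} -> series R n) : series R n := fun w =>
  \sum_(d : {ffun 'I_n -> 'I_q}) smul (sigma (g d)) (sX R (boxmon d)) w.

(* g = (Theta_u f)_u : the (unique) family in A_0 with f = sum_u sigma(g_u) X^u *)
Definition is_dwork_decomp (R : idomainType) (v : R -> nat) n q
    (sigma : series R n -> series R n) (f : series R n)
    (g : {ffun 'I_n -> 'I_q} -> series R n) : Prop :=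
  (forall d, inA0 v (g d)) /\ f =1 dwork_sum sigma g.

(* Main.v *)
Require Import Defs.
From mathcomp Require Import all_boot all_order all_algebra.
From mathcomp Require Import ring lra zify.
From Stdlib Require Import FunctionalExtensionality IndefiniteDescription.
Import Order.TTheory GRing.Theory Num.Theory.
Set Implicit Arguments. Unset Strict Implicit. Unset Printing Implicit Defensive.
Local Open Scope ring_scope.

Lemma vL1 (R : idomainType) (v : R -> nat) (pi : R)
  (Hpi : ~~ (pi \is a GRing.unit))
  (Hdec : forall a : R, a != 0 -> exists w : R, w \is a GRing.unit /\ a = pi ^+ v a * w)
  (a r : R) (k : nat) : a != 0 -> a = pi ^+ k * r -> (k <= v a)%N.
Proof.
move=> a0 ak; have [w [wu aw]] := Hdec a a0.
rewrite leqNgt; apply/negP => lt.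
have pv0 : pi ^+ v a != 0 by apply: contraNneq a0 => e; rewrite aw e mul0r.
have e : pi ^+ v a * w = pi ^+ v a * (pi * (pi ^+ (k - (v a).+1) * r)).
  rewrite -aw {1}ak !mulrA -exprSr -exprD; congr (_ * r); congr (pi ^+ _); lia.
have := mulfI pv0 e => {}e.
move/negP: Hpi; apply; apply/unitrPr.
exists (pi ^+ (k - (v a).+1) * r * w^-1).
by rewrite !mulrA -[pi * _ * r]mulrA -e divrr.
Qed.


Lemma ordgeP (R : idomainType) (v : R -> nat) (pi : R)
  (Hpi : ~~ (pi \is a GRing.unit))
  (Hdec : forall a : R, a != 0 -> exists w : R, w \is a GRing.unit /\ a = pi ^+ v a * w)
  (a : R) (x : rat) :
  ordge v a x <-> (a = 0 \/ exists k : nat, x <= k%:R /\ rdvd (pi ^+ k) a).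
Proof.
split.
  case=> [->|h]; first by left.
  have [->|a0] := eqVneq a 0; first by left.
  right; exists (v a); split => //.
  by have [w [_ aw]] := Hdec a a0; exists w.
case=> [->|[k [xk [r ar]]]]; first by left.
have [->|a0] := eqVneq a 0; first by left.
right; apply: (le_trans xk); rewrite ler_nat.
exact: (vL1 Hpi Hdec a0 ar).
Qed.

Definition vgood (R : idomainType) (v : R -> nat) (pi : R) :=
  [/\ pi != 0, ~~ (pi \is a GRing.unit) &
  forall a : R, a != 0 -> exists w : R, w \is a GRing.unit /\ a = pi ^+ v a * w].

Lemma ordge_le (R : idomainType) (v : R -> nat) (a : R) (x y : rat) :
  x <= y -> ordge v a y -> ordge v a x.
Proof. by move=> xy [->|h]; [left|right; apply: le_trans h]. Qed.

Lemma ordge0 (R : idomainType) (v : R -> nat) (x : rat) : ordge v 0 x.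
Proof. by left. Qed.

Lemma ordge_np (R : idomainType) (v : R -> nat) (a : R) (x : rat) :
  x <= 0 -> ordge v a x.
Proof. by move=> h; right; apply: le_trans h _. Qed.

Lemma ordge_min (R : idomainType) (v : R -> nat) (a : R) (x y : rat) :
  ordge v a (Order.min x y) -> ordge v a x \/ ordge v a y.
Proof.
case=> [->|h]; first by left; left.
by move: h; rewrite ge_min => /orP[h|h]; [left|right]; right.
Qed.

Lemma ordgeM (R : idomainType) (v : R -> nat) (pi : R) (H : vgood v pi)
  (a e : R) (x y : rat) : ordge v a x -> ordge v e y -> ordge v (a * e) (x + y).
Proof.
case: H => p0 pu hd.
move=> /(ordgeP pu hd) [->|[k [xk [r ar]]]]; first by rewrite mul0r; left.
move=> /(ordgeP pu hd) [->|[m [ym [s es]]]]; first by rewrite mulr0; left.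
apply/(ordgeP pu hd); right; exists (k + m)%N; split.
  by rewrite natrD lerD.
by exists (r * s); rewrite ar es exprD; ring.
Qed.

Lemma ordgeD (R : idomainType) (v : R -> nat) (pi : R) (H : vgood v pi)
  (a e : R) (x : rat) : ordge v a x -> ordge v e x -> ordge v (a + e) x.
Proof.
case: H => p0 pu hd.
move=> /(ordgeP pu hd) [->|[k [xk [r ar]]]]; first by rewrite add0r.
move=> /(ordgeP pu hd) [->|[m [ym [s es]]]]; first by rewrite addr0; apply/(ordgeP pu hd); right; exists k; split => //; exists r.
apply/(ordgeP pu hd); right; exists (minn k m); split.
  by case: (leqP k m) => _.
exists (pi ^+ (k - minn k m) * r + pi ^+ (m - minn k m) * s).
rewrite ar es mulrDr !mulrA -!exprD; congr (pi ^+ _ * _ + pi ^+ _ * _); lia.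
Qed.

Lemma ordgeN (R : idomainType) (v : R -> nat) (pi : R) (H : vgood v pi)
  (a : R) (x : rat) : ordge v a x -> ordge v (- a) x.
Proof.
move=> h; rewrite -mulN1r -[x]add0r; apply: (ordgeM H) => //.
exact: ordge_np.
Qed.

Lemma ordgeB (R : idomainType) (v : R -> nat) (pi : R) (H : vgood v pi)
  (a e : R) (x : rat) : ordge v a x -> ordge v e x -> ordge v (a - e) x.
Proof. by move=> ha he; apply: (ordgeD H) => //; apply: (ordgeN H). Qed.

Lemma ordge_sum (R : idomainType) (v : R -> nat) (pi : R) (H : vgood v pi)
  (I : Type) (s : seq I) (P : pred I) (F : I -> R) (x : rat) :
  (forall i, P i -> ordge v (F i) x) -> ordge v (\sum_(i <- s | P i) F i) x.
Proof.
move=> h; apply: (big_ind (fun y => ordge v y x)) => //; first exact: ordge0.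
by move=> ? ?; apply: (ordgeD H).
Qed.

Lemma ordge_pi (R : idomainType) (v : R -> nat) (pi : R) (H : vgood v pi)
  (k : nat) (r : R) : ordge v (pi ^+ k * r) k%:R.
Proof.
case: H => p0 pu hd; apply/(ordgeP pu hd); right; exists k; split => //.
by exists r.
Qed.

Lemma ordge_div (R : idomainType) (v : R -> nat) (pi : R) (H : vgood v pi)
  (a : R) (N : nat) : ordge v a N%:R -> exists r, a = pi ^+ N * r.
Proof.
case: H => p0 pu hd.
move=> /(ordgeP pu hd) [->|[k [xk [r ar]]]]; first by exists 0; rewrite mulr0.
exists (pi ^+ (k - N) * r); rewrite ar mulrA -exprD; congr (pi ^+ _ * _).
by move: xk; rewrite ler_nat; lia.
Qed.

Lemma ordge_cancel (R : idomainType) (v : R -> nat) (pi : R) (H : vgood v pi)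
  (r : R) (N N' : nat) : ordge v (pi ^+ N * r) (N + N')%:R -> ordge v r N'%:R.
Proof.
move=> h; have [s hs] := ordge_div H h.
have pN : pi ^+ N != 0 by rewrite expf_neq0 //; case: H.
move: hs; rewrite exprD -mulrA => /(mulfI pN) ->.
exact: (ordge_pi H).
Qed.


Definition madd n (a b : mon n) : mon n := [ffun i => (a i + b i)%N].
Definition msub n (a b : mon n) : mon n := [ffun i => (a i - b i)%N].
Definition msc n (k : nat) (a : mon n) : mon n := [ffun i => (k * a i)%N].

Lemma deg_madd n (a b : mon n) : deg (madd a b) = (deg a + deg b)%N.
Proof. by rewrite /deg -big_split; apply: eq_bigr => i _; rewrite ffunE. Qed.

Lemma deg_msc n k (a : mon n) : deg (msc k a) = (k * deg a)%N.
Proof. by rewrite /deg big_distrr; apply: eq_bigr => i _; rewrite ffunE. Qed.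

Lemma deg_msub n (a b : mon n) : [forall i, b i <= a i]%N ->
  (deg (msub a b) + deg b)%N = deg a.
Proof.
move/forallP=> h; rewrite /deg -big_split; apply: eq_bigr => i _.
by rewrite ffunE /= subnK.
Qed.

Lemma deg_ge n (a : mon n) i : (a i <= deg a)%N.
Proof. by rewrite /deg (bigD1 i) //= leq_addr. Qed.

Lemma smul_bound (R : idomainType) (v : R -> nat) (pi : R) (H : vgood v pi)
  n (f g : series R n) (b c1 c2 : rat) :
  (forall t, ordge v (f t) (b * (deg t)%:R + c1)) ->
  (forall t, ordge v (g t) (b * (deg t)%:R + c2)) ->
  forall w, ordge v (smul f g w) (b * (deg w)%:R + (c1 + c2)).
Proof.
move=> hf hg w; rewrite /smul; apply: (ordge_sum H) => t ht.
have := ordgeM H (hf [ffun i => nat_of_ord (t i)]) (hg [ffun i => (w i - t i)%N]).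
apply: ordge_le.
have e : (deg [ffun i => (w i - t i)%N] + deg [ffun i => nat_of_ord (t i)])%N = deg w.
  rewrite /deg -big_split; apply: eq_bigr => i _; rewrite !ffunE /= subnK //.
  by move/forallP: ht.
have e' : (deg w)%:R = (deg [ffun i => (w i - t i)%N])%:R + (deg [ffun i => nat_of_ord (t i)])%:R :> rat.
  by rewrite -natrD e.
rewrite e'; lra.
Qed.

Lemma smulDl (R : idomainType) n (f g h : series R n) w :
  smul (sadd f g) h w = smul f h w + smul g h w.
Proof. by rewrite /smul /sadd -big_split; apply: eq_bigr => t _; rewrite mulrDl. Qed.

Lemma smulDr (R : idomainType) n (f g h : series R n) w :
  smul h (sadd f g) w = smul h f w + smul h g w.
Proof. by rewrite /smul /sadd -big_split; apply: eq_bigr => t _; rewrite mulrDr. Qed.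

Lemma smulZl (R : idomainType) n (a : R) (f g : series R n) w :
  smul (sscale a f) g w = a * smul f g w.
Proof. by rewrite /smul /sscale mulr_sumr; apply: eq_bigr => t _; rewrite mulrA. Qed.

Lemma smul_ext (R : idomainType) n (f f' g g' : series R n) w :
  f =1 f' -> g =1 g' -> smul f g w = smul f' g' w.
Proof. by move=> hf hg; rewrite /smul; apply: eq_bigr => t _; rewrite hf hg. Qed.

Lemma smul_sXr (R : idomainType) n (F : series R n) (u w : mon n) :
  smul F (sX R u) w = if [forall i, u i <= w i]%N then F (msub w u) else 0.
Proof.
rewrite /smul /sX; case: ifP => [/forallP hu|/negbT hu].
  have lt i : (w i - u i < (deg w).+1)%N.
    by rewrite ltnS; apply: leq_trans (leq_subr _ _) (deg_ge _ _).
  have [t0 t0E] : {t0 : {ffun 'I_n -> 'I_(deg w).+1} | forall i, nat_of_ord (t0 i) = (w i - u i)%N}.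
    by exists [ffun i => inord (w i - u i)] => i; rewrite ffunE inordK.
  have ht0 : [forall i, (t0 i <= w i)%N].
    by apply/forallP => i; rewrite t0E leq_subr.
  rewrite (bigD1 t0) //= big1 ?addr0.
    have -> : [ffun i => nat_of_ord (t0 i)] = msub w u.
      by apply/ffunP => i; rewrite !ffunE t0E.
    have -> : [ffun i => (w i - t0 i)%N] = u.
      by apply/ffunP => i; rewrite !ffunE t0E subKn.
    by rewrite eqxx mulr1.
  move=> t /andP[/forallP ht nt]; case: eqP => [e|_]; last by rewrite mulr0.
  case/eqP: nt; apply/ffunP => i; apply/val_inj; rewrite /= t0E.
  have := congr1 (fun f : mon n => f i) e; rewrite ffunE /= => <-.
  by rewrite subKn.
apply: big1 => t /forallP ht; case: eqP => [e|_]; last by rewrite mulr0.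
case/negP: hu; apply/forallP => i; rewrite -e ffunE; exact: leq_subr.
Qed.

Lemma sX_mul (R : idomainType) n (a b w : mon n) :
  smul (sX R a) (sX R b) w = sX R (madd a b) w.
Proof.
rewrite smul_sXr /sX; case: ifP => [/forallP h|/negbT h].
  suff -> : (msub w b == a) = (w == madd a b) by [].
  apply/eqP/eqP => e; apply/ffunP => i.
    by have := congr1 (fun f : mon n => f i) e; rewrite !ffunE /= => <-; rewrite subnK.
  by rewrite e !ffunE addnK.
case: eqP => // e; case/negP: h; apply/forallP => i; by rewrite e ffunE leq_addl.
Qed.

Lemma deg_emon n (i : 'I_n) k : deg (emon i k) = k.
Proof.
rewrite /deg (bigD1 i) //= big1 ?addn0; first by rewrite ffunE eqxx.
by move=> j /negbTE ji; rewrite ffunE ji.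
Qed.

Lemma sX_bound (R : idomainType) (v : R -> nat) n (u : mon n) (b : rat) t :
  ordge v (sX R u t) (b * (deg t)%:R + - (b * (deg u)%:R)).
Proof.
rewrite /sX; case: eqP => [->|_]; last exact: ordge0.
by apply: ordge_np; rewrite subrr.
Qed.

Lemma inA0_add (R : idomainType) (v : R -> nat) (pi : R) (H : vgood v pi) n
  (f g : series R n) : inA0 v f -> inA0 v g -> inA0 v (sadd f g).
Proof.
move=> hf hg N; have [M1 h1] := hf N; have [M2 h2] := hg N.
exists (maxn M1 M2) => u hu; apply: (ordgeD H).
  by apply: h1; apply: leq_trans hu; apply: leq_maxl.
by apply: h2; apply: leq_trans hu; apply: leq_maxr.
Qed.

Lemma inA0_scale (R : idomainType) (v : R -> nat) (pi : R) (H : vgood v pi) n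
  (a : R) (f : series R n) : inA0 v f -> inA0 v (sscale a f).
Proof.
move=> hf N; have [M h] := hf N; exists M => u hu.
rewrite /sscale -[N%:R]add0r; apply: (ordgeM H); first exact: ordge_np.
exact: h.
Qed.

Lemma inA0_sX (R : idomainType) (v : R -> nat) n (u : mon n) : inA0 v (sX R u).
Proof.
move=> N; exists (deg u).+1 => w hw; rewrite /sX; case: eqP => [e|_]; last exact: ordge0.
by move: hw; rewrite e ltnn.
Qed.

Lemma inA0_zero (R : idomainType) (v : R -> nat) n : inA0 v (fun _ : mon n => (0 : R)).
Proof. by move=> N; exists 0%N => u _; exact: ordge0. Qed.

Lemma pick_sum (R : idomainType) n M (F : mon n -> R) (y : mon n) :
  \sum_(t : {ffun 'I_n -> 'I_M}) F [ffun i => nat_of_ord (t i)] * sX R [ffun i => nat_of_ord (t i)] y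
  = if [forall i, y i < M]%N then F y else 0.
Proof.
rewrite /sX; case: ifP => [/forallP hy|/negbT hy].
  have [t0 t0E] : {t0 : {ffun 'I_n -> 'I_M} | forall i, nat_of_ord (t0 i) = y i}.
    by exists [ffun i => Ordinal (hy i)] => i; rewrite ffunE.
  rewrite (bigD1 t0) //= big1 ?addr0.
    have key : forall z : mon n, z = y -> F z * (y == z)%:R = F y by move=> z ->; rewrite eqxx mulr1.
    by apply: key; apply/ffunP => i; rewrite ffunE t0E.
  move=> t nt; case: eqP => [e|_]; last by rewrite mulr0.
  case/eqP: nt; apply/ffunP => i; apply/val_inj; rewrite /= t0E e ffunE //.
apply: big1 => t _; case: eqP => [e|_]; last by rewrite mulr0.
by case/negP: hy; apply/forallP => i; rewrite e ffunE.
Qed.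

Lemma msc_eq n q (x y : mon n) : (0 < q)%N ->
  (x == msc q y) = [forall i, q %| x i]%N && ([ffun i => (x i %/ q)%N] == y).
Proof.
move=> q0; apply/eqP/andP => [->|[/forallP h /eqP e]].
  split; first by apply/forallP => i; rewrite ffunE dvdn_mulr.
  by apply/eqP/ffunP => i; rewrite !ffunE mulKn.
apply/ffunP => i; rewrite -e !ffunE mulnC divnK //; exact: h.
Qed.


Lemma sig_zero (R : idomainType) (v : R -> nat) (pi : R) q n sigma fs
  (Hs : is_frob v pi q sigma fs) :
  sigma (fun _ : mon n => 0) = (fun _ => 0).
Proof.
case: Hs => _ Hsc _ _ _.
have e : sscale 0 (fun _ : mon n => (0 : R)) = (fun _ => 0).
  by apply: functional_extensionality => w; rewrite /sscale mul0r.
apply: functional_extensionality => w.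
by have := Hsc 0 _ (inA0_zero v n) w; rewrite e /sscale mul0r.
Qed.

Lemma inA0_psum (R : idomainType) (v : R -> nat) (pi : R) (H : vgood v pi) n
  (I : Type) (s : seq I) (a : I -> R) (m : I -> mon n) :
  inA0 v (fun w => \sum_(t <- s) a t * sX R (m t) w).
Proof.
elim: s => [|x s IH].
  have -> : (fun w => \sum_(t <- [::]) a t * sX R (m t) w) = (fun _ => 0).
    by apply: functional_extensionality => w; rewrite big_nil.
  exact: inA0_zero.
have -> : (fun w => \sum_(t <- x :: s) a t * sX R (m t) w) =
   sadd (sscale (a x) (sX R (m x))) (fun w => \sum_(t <- s) a t * sX R (m t) w).
  by apply: functional_extensionality => w; rewrite big_cons.
apply: (inA0_add H) => //; apply: (inA0_scale H); exact: inA0_sX.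
Qed.

Lemma sig_psum (R : idomainType) (v : R -> nat) (pi : R) (H : vgood v pi) q n sigma fs
  (Hs : is_frob v pi q sigma fs)
  (I : Type) (s : seq I) (a : I -> R) (m : I -> mon n) x :
  sigma (fun w => \sum_(t <- s) a t * sX R (m t) w) x =
  \sum_(t <- s) a t * sigma (sX R (m t)) x.
Proof.
elim: s x => [|y s IH] x.
  have -> : (fun w => \sum_(t <- [::]) a t * sX R (m t) w) = (fun _ => 0).
    by apply: functional_extensionality => w; rewrite big_nil.
  by rewrite (sig_zero Hs) big_nil.
have -> : (fun w => \sum_(t <- y :: s) a t * sX R (m t) w) =
   sadd (sscale (a y) (sX R (m y))) (fun w => \sum_(t <- s) a t * sX R (m t) w).
  by apply: functional_extensionality => w; rewrite big_cons.
case: Hs => [[_ Hadd] Hsc _ _ _].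
rewrite Hadd; last exact: (inA0_psum H).
  by rewrite /sadd Hsc ?big_cons ?IH //; exact: inA0_sX.
apply: (inA0_scale H); exact: inA0_sX.
Qed.

Definition Dm (R : idomainType) n (sigma : series R n -> series R n) q (u : mon n) : series R n :=
  fun x => sigma (sX R u) x - sX R (msc q u) x.

Lemma Dbound (R : idomainType) (v : R -> nat) (pi : R) (H : vgood v pi) q n sigma fs
  (Hs : is_frob v pi q sigma fs) (b : rat)
  (Hb0 : 0 <= b) (HE : forall i s, ordge v (pi * fs i s) (b * (deg s)%:R)) :
  forall k (u : mon n), deg u = k -> forall x,
  ordge v (Dm sigma q u x) (b * (deg x)%:R - q%:R * b * (deg u)%:R + q%:R * b) /\
  ordge v (Dm sigma q u x) 1.
Proof.
have Hs' := Hs; case: Hs' => [[_ Hadd] Hsc Hmul [H1 _] HX].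
elim=> [|k IH] u hu x.
  have -> : u = mon0 n.
    by apply/ffunP => i; rewrite ffunE; apply/eqP; rewrite -leqn0 -hu deg_ge.
  have e : msc q (mon0 n) = mon0 n by apply/ffunP => i; rewrite !ffunE muln0.
  by rewrite /Dm H1 e subrr; split; exact: ordge0.
have [i ui] : exists i, (0 < u i)%N.
  case: (pickP (fun i => 0 < u i)%N) => [i ui|h]; first by exists i.
  suff : deg u = 0%N by rewrite hu.
  rewrite /deg big1 // => j _; move: (h j) => /= /negbT; by rewrite lt0n negbK => /eqP.
set u' : mon n := [ffun j => (u j - (j == i))%N].
have ue : u = madd u' (emon i 1).
  apply/ffunP => j; rewrite !ffunE; case: eqP => [->|_]; last by rewrite subn0 addn0.
  by rewrite subn1 addn1 prednK.
have du' : deg u' = k by move: hu; rewrite ue deg_madd deg_emon addn1 => -[].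
have eS : sX R u = (fun w => smul (sX R u') (sX R (emon i 1)) w).
  by apply: functional_extensionality => w; rewrite sX_mul -ue.
have ex : Dm sigma q u x = smul (sX R (msc q u')) (sscale pi (fs i)) x +
   smul (Dm sigma q u') (sX R (emon i q)) x + smul (Dm sigma q u') (sscale pi (fs i)) x.
  rewrite /Dm {1}eS.
  have -> : (fun w => smul (sX R u') (sX R (emon i 1)) w) = smul (sX R u') (sX R (emon i 1)) by [].
  rewrite Hmul; try exact: inA0_sX.
  rewrite (@smul_ext _ _ _ (sadd (sX R (msc q u')) (Dm sigma q u')) _
             (sadd (sX R (emon i q)) (sscale pi (fs i)))); last first.
  - exact: HX.
  - by move=> w; rewrite /sadd /Dm addrC subrK.
  rewrite (smulDl (sX R (msc q u')) (Dm sigma q u')).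
  rewrite (smulDr (sX R (emon i q)) (sscale pi (fs i)) (sX R (msc q u'))).
  rewrite (smulDr (sX R (emon i q)) (sscale pi (fs i)) (Dm sigma q u')) sX_mul.
  have -> : madd (msc q u') (emon i q) = msc q u.
    apply/ffunP => j; rewrite !ffunE; case: eqP => [->|_]; last by rewrite subn0 addn0.
    by rewrite -mulnSr subn1 prednK.
  ring.
have dC : deg u = (deg u' + 1)%N by rewrite du' hu addn1.
have hA b' t : ordge v (sX R (msc q u') t) (b' * (deg t)%:R + - (b' * (q%:R * (deg u')%:R))).
  by rewrite -natrM -deg_msc; exact: sX_bound.
have hC b' t : ordge v (sX R (emon i q) t) (b' * (deg t)%:R + - (b' * q%:R)).
  by rewrite -{2}(deg_emon i q); exact: sX_bound.
have hE t : ordge v (sscale pi (fs i) t) (b * (deg t)%:R + 0) by rewrite addr0; exact: HE.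
have hE0 t : ordge v (sscale pi (fs i) t) (0 * (deg t)%:R + 1).
  by rewrite mul0r add0r /sscale -[pi]expr1; exact: (ordge_pi H 1).
have hD t : ordge v (Dm sigma q u' t) (b * (deg t)%:R + (- (q%:R * b * (deg u')%:R) + q%:R * b)).
  by have [h _] := IH u' du' t; apply: ordge_le h; lra.
have hD0 t : ordge v (Dm sigma q u' t) (0 * (deg t)%:R + 1).
  by have [_ h] := IH u' du' t; rewrite mul0r add0r.
have q0 : 0 <= q%:R :> rat by rewrite ler0n.
have qb0 : 0 <= q%:R * b :> rat by rewrite mulr_ge0.
rewrite ex dC natrD; split; (apply: (ordgeD H); first apply: (ordgeD H)).
- by apply: ordge_le (smul_bound H (hA b) hE x); lra.
- by apply: ordge_le (smul_bound H hD (hC b) x); lra.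
- by apply: ordge_le (smul_bound H hD hE x); lra.
- by apply: ordge_le (smul_bound H (hA 0) hE0 x); lra.
- by apply: ordge_le (smul_bound H hD0 (hC 0) x); lra.
- by apply: ordge_le (smul_bound H hD0 hE0 x); lra.
Qed.


Definition sig0 (R : idomainType) n q (h : series R n) : series R n := fun x =>
  if [forall i, q %| x i]%N then h [ffun i => (x i %/ q)%N] else 0.

Lemma Ebound (R : idomainType) (v : R -> nat) (pi : R) (H : vgood v pi) q n sigma fs
  (Hs : is_frob v pi q sigma fs) (b : rat)
  (Hb0 : 0 <= b) (HE : forall i s, ordge v (pi * fs i s) (b * (deg s)%:R)) (hq : (0 < q)%N)
  (h : series R n) (hA0 : inA0 v h) (beta : rat) (K : nat)
  (hh : forall y, ordge v (h y) (Order.min (q%:R * b * (deg y)%:R + beta) K%:R)) :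
  forall x, ordge v (sigma h x - sig0 q h x)
                  (Order.min (b * (deg x)%:R + beta + q%:R * b) (K.+1)%:R).
Proof.
have Hs' := Hs; case: Hs' => [[_ Hadd] Hsc Hmul [H1 _] HX].
have [p0 _ _] := H.
set N := K.+1.
have [M hM] := hA0 N.
have hdiv : forall y, exists r, h y = (if [forall i, y i < M]%N then h y else 0) + pi ^+ N * r.
  move=> y; case: ifP => [_|/negbT hy]; first by exists 0; rewrite mulr0 addr0.
  have : ordge v (h y) N%:R.
    apply: hM; move: hy; rewrite negb_forall => /existsP [i]; rewrite -leqNgt => hi.
    exact: leq_trans hi (deg_ge _ _).
  by move/(ordge_div H) => [r ->]; exists r; rewrite add0r.
pose h' : series R n := fun y => proj1_sig (constructive_indefinite_description _ (hdiv y)).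
have hh'E y : h y = (if [forall i, y i < M]%N then h y else 0) + pi ^+ N * h' y.
  by rewrite /h'; case: constructive_indefinite_description.
pose P : series R n := fun w => \sum_(t : {ffun 'I_n -> 'I_M})
   h [ffun i => nat_of_ord (t i)] * sX R [ffun i => nat_of_ord (t i)] w.
have hy y : h y = P y + pi ^+ N * h' y by rewrite /P pick_sum -hh'E.
have hP : inA0 v P by exact: (inA0_psum H).
have hh'0 : inA0 v h'.
  move=> N'; have [M2 hM2] := hA0 (N + N')%N; exists M2 => y hy2.
  have := hh'E y; case: ifP => _.
    move=> e; have : pi ^+ N * h' y = 0 by apply: (addrI (h y)); rewrite -e addr0.
    move/eqP; rewrite mulf_eq0 expf_eq0 (negbTE p0) andbF /=.
    by move/eqP ->; exact: ordge0.
  rewrite add0r => e; apply: (ordge_cancel H (N := N)); rewrite -e; exact: hM2.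
have hdec : h = sadd P (sscale (pi ^+ N) h').
  by apply: functional_extensionality => y; rewrite hy.
move=> x.
have e1 : sigma h x = sigma P x + pi ^+ N * sigma h' x.
  rewrite {1}hdec Hadd //; last exact: (inA0_scale H).
  by rewrite /sadd Hsc.
have e2 : sig0 q h x = sig0 q P x + pi ^+ N * sig0 q h' x.
  by rewrite /sig0; case: ifP => _; rewrite ?hy ?mulr0 ?addr0.
have e3 : sig0 q P x = \sum_(t : {ffun 'I_n -> 'I_M})
     h [ffun i => nat_of_ord (t i)] * sX R (msc q [ffun i => nat_of_ord (t i)]) x.
  rewrite /sig0 /sX; under eq_bigr do rewrite msc_eq //.
  case: ifP => _ /=; last by rewrite big1 // => t _; rewrite mulr0.
  by rewrite /P /sX; apply: eq_bigr => t _.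
have e4 : sigma P x = \sum_(t : {ffun 'I_n -> 'I_M})
     h [ffun i => nat_of_ord (t i)] * sigma (sX R [ffun i => nat_of_ord (t i)]) x.
  exact: (sig_psum H Hs).
have ex : sigma h x - sig0 q h x = \sum_(t : {ffun 'I_n -> 'I_M})
     h [ffun i => nat_of_ord (t i)] * Dm sigma q [ffun i => nat_of_ord (t i)] x
     + pi ^+ N * (sigma h' x - sig0 q h' x).
  rewrite e1 e2 e3 e4 /Dm.
  have -> : forall a b c d : R, a + c - (b + d) = (a - b) + (c - d) by move=> *; ring.
  by rewrite -sumrB mulrBr; congr (_ + _); apply: eq_bigr => t _; rewrite mulrBr.
rewrite ex; apply: (ordgeD H).
  apply: (ordge_sum H) => t _.
  have [D1 D2] : ordge v (Dm sigma q [ffun i => nat_of_ord (t i)] x)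
      (b * (deg x)%:R - q%:R * b * (deg [ffun i => nat_of_ord (t i)])%:R + q%:R * b) /\
      ordge v (Dm sigma q [ffun i => nat_of_ord (t i)] x) 1.
    exact: (Dbound H Hs Hb0 HE (erefl _) x).
  case: (ordge_min (hh [ffun i => nat_of_ord (t i)])) => hc.
    apply: ordge_le (ordgeM H hc D1).
    rewrite ge_min; apply/orP; left; lra.
  apply: ordge_le (ordgeM H hc D2).
  by rewrite ge_min; apply/orP; right; rewrite /N -addn1 natrD.
apply: ordge_le (ordge_pi H N _).
by rewrite ge_min lexx orbT.
Qed.


Lemma box_unique n q (d d0 : {ffun 'I_n -> 'I_q}) (y : mon n) :
  let w := madd (msc q y) (boxmon d0) in
  [forall i, boxmon d i <= w i]%N -> [forall i, q %| msub w (boxmon d) i]%N -> d = d0.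
Proof.
move=> w /forallP h1 /forallP h2; apply/ffunP => i; apply/val_inj.
have := h1 i; have := h2 i; rewrite /w !ffunE => /dvdnP [k hk] le.
have e : (q * y i + d0 i)%N = (k * q + d i)%N by rewrite -hk subnK.
have := congr1 (fun m => m %% q)%N e; rewrite /= mulnC !modnMDl !modn_small //.
Qed.

Lemma part1 (R : idomainType) (v : R -> nat) (pi : R) (H : vgood v pi) q n sigma fs
  (Hs : is_frob v pi q sigma fs) (b : rat)
  (Hb0 : 0 <= b) (HE : forall i s, ordge v (pi * fs i s) (b * (deg s)%:R)) (hq : (0 < q)%N)
  (c : rat) (f : series R n) (g : {ffun 'I_n -> 'I_q} -> series R n) :
  inL v b c f -> is_dwork_decomp v sigma f g ->
  forall d, inL v (q%:R * b) c (g d).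
Proof.
move=> hf [hgA hfg].
have S : forall K d y, ordge v (g d y)
    (Order.min (q%:R * b * (deg y)%:R + (b * (deg (boxmon d))%:R + c)) K%:R).
  elim=> [|K IH] d0 y.
    by apply: ordge_np; rewrite ge_min lexx orbT.
  pose w := madd (msc q y) (boxmon d0).
  pose E d := sigma (g d) (msub w (boxmon d)) - sig0 q (g d) (msub w (boxmon d)).
  have ef : f w = g d0 y + \sum_d (if [forall i, boxmon d i <= w i]%N then E d else 0).
    rewrite hfg /dwork_sum.
    under eq_bigr do rewrite smul_sXr.
    have eb : forall d, (if [forall i, boxmon d i <= w i]%N then sigma (g d) (msub w (boxmon d)) else 0)
       = (if [forall i, boxmon d i <= w i]%N then sig0 q (g d) (msub w (boxmon d)) else 0) +
         (if [forall i, boxmon d i <= w i]%N then E d else 0).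
      by move=> d; case: ifP => _; rewrite ?addr0 // /E addrC subrK.
    rewrite (eq_bigr _ (fun d _ => eb d)) big_split /=; congr (_ + _).
    rewrite (bigD1 d0) //= big1 ?addr0.
      have -> : [forall i, boxmon d0 i <= w i]%N.
        by apply/forallP => i; rewrite /w !ffunE leq_addl.
      rewrite /sig0.
      have -> : [forall i, q %| msub w (boxmon d0) i]%N.
        by apply/forallP => i; rewrite /w !ffunE addnK dvdn_mulr.
      congr (g d0 _); apply/ffunP => i; rewrite !ffunE addnK mulKn //.
    move=> d nd; case: ifP => // h1; rewrite /sig0; case: ifP => // h2.
    by case/eqP: nd; exact: (box_unique h1 h2).
  have -> : g d0 y = f w - \sum_d (if [forall i, boxmon d i <= w i]%N then E d else 0).
    by rewrite ef addrK.
  have dw : deg w = (q * deg y + deg (boxmon d0))%N by rewrite /w deg_madd deg_msc.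
  apply: (ordgeB H).
    apply: ordge_le (hf w); rewrite dw natrD natrM ge_min; apply/orP; left; lra.
  apply: (ordge_sum H) => d _; case: ifP => hd; last exact: ordge0.
  have := Ebound H Hs Hb0 HE hq (hgA d) (IH d) (msub w (boxmon d)).
  apply: ordge_le.
  have dd := deg_msub hd.
  have dd' : (deg (msub w (boxmon d)))%:R = (deg w)%:R - (deg (boxmon d))%:R :> rat.
    by rewrite -dd natrD addrK.
  rewrite le_min !ge_min lexx orbT andbT; apply/orP; left.
  rewrite dd' dw natrD natrM.
  have : 0 <= q%:R * b :> rat by rewrite mulr_ge0 ?ler0n.
  lra.
move=> d y.
have := S (v (g d y)).+1 d y; case=> [->|]; first exact: ordge0.
rewrite ge_min => /orP [h|]; last by rewrite ler_nat ltnn.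
right; apply: le_trans h.
have : 0 <= b * (deg (boxmon d))%:R by rewrite mulr_ge0 ?ler0n.
lra.
Qed.

Unset Implicit Arguments.
Set Strict Implicit.

Theorem theorem4p5 (R : idomainType) (v : R -> nat) (pi : R) (q n : nat)
    (Hn : (0 < n)%N)
    (sigma : series R n -> series R n) (fs : 'I_n -> series R n) (b_sigma : rat)
    (HR : is_cdvr v pi q) (Hsigma : is_frob v pi q sigma fs)
    (Hbs : 0 < b_sigma) (Hfs : forall i, inL v b_sigma 0 (sscale pi (fs i)))
    (b c : rat) (Hb : 0 < b) (Hbb : b <= b_sigma) :
  (forall (f : series R n) (g : {ffun 'I_n -> 'I_q} -> series R n),
      inL v b c f -> is_dwork_decomp v sigma f g ->
      forall d, inL v (q%:R * b) c (g d))
  /\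
  (forall (f : series R n) (g : {ffun 'I_n -> 'I_q} -> series R n),
      inA v f -> is_dwork_decomp v sigma f g ->
      forall d, inA v (g d)).
Proof.
have H : vgood v pi by case: HR => [[p0 pu] hd _ _ _]; split.
have HE b' : 0 <= b' -> b' <= b_sigma -> forall i s, ordge v (pi * fs i s) (b' * (deg s)%:R).
  move=> b0 bb i s; have := Hfs i s; rewrite addr0; apply: ordge_le.
  by rewrite ler_wpM2r ?ler0n.
split.
  move=> f g hf hd d.
  have hq : (0 < q)%N := leq_ltn_trans (leq0n _) (ltn_ord (d (Ordinal Hn))).
  apply: (part1 H Hsigma (ltW Hb) (HE b (ltW Hb) Hbb) _ hf hd) => //.
move=> f g [hA0 [eps eps0 [M hM]]] hd d.
have hq : (0 < q)%N := leq_ltn_trans (leq0n _) (ltn_ord (d (Ordinal Hn))).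
set b' := Order.min eps b_sigma.
have b'0 : 0 < b' by rewrite lt_min eps0 Hbs.
have b'e : b' <= eps by rewrite ge_min lexx.
have b's : b' <= b_sigma by rewrite ge_min lexx orbT.
have hf : inL v b' (- (b' * M%:R)) f.
  move=> u; case: (leqP M (deg u)) => hu.
    apply: ordge_le (hM u hu).
    have : 0 <= b' * M%:R by rewrite mulr_ge0 ?ler0n // ltW.
    have : b' * (deg u)%:R <= eps * (deg u)%:R by rewrite ler_wpM2r ?ler0n.
    lra.
  apply: ordge_np.
  have : b' * (deg u)%:R <= b' * M%:R by rewrite ler_wpM2l ?ler_nat ?ltW // ltnW.
  lra.
have hg := part1 H Hsigma (ltW b'0) (HE b' (ltW b'0) b's) hq hf hd d.
split; first by case: hd => hgA _; exact: hgA.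
exists (q%:R * b' / 2).
  by rewrite divr_gt0 // mulr_gt0 // ltr0n.
exists (2 * M)%N => u hu.
apply: ordge_le (hg u).
have q1 : 1 <= q%:R :> rat by rewrite ler1n.
have du : 2 * M%:R <= (deg u)%:R :> rat by rewrite -natrM ler_nat.
have : b' * (deg u)%:R <= q%:R * b' * (deg u)%:R.
  have : 0 <= b' * (deg u)%:R by rewrite mulr_ge0 ?ler0n // ltW.
  nra.
have : 2 * (b' * M%:R) <= b' * (deg u)%:R.
  by rewrite mulrCA ler_wpM2l // ltW.
lra.
Qed.
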